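(* Let $\mathcal T=(T,\lambda)$ be a temporal oriented tree with connectivity graph $G$, and let $H$ be an induced cycle of $G$ of even length $k\ge 6$, with vertices cyclically ordered $u_1,\dots,u_k$ (indices taken modulo $k$). For each edge $e=uv$ of $G$, let $Q_e$ be any temporal path of $\mathcal T$ from $u$ to $v$ or from $v$ to $u$. Then for every $i$, the paths $Q_{u_iu_{i+1}}$ and $Q_{u_{i+2}u_{i+3}}$ have a common vertex.
   Context: A temporal digraph is a pair $(D,\lambda)$ with $D=(V,A)$ a finite digraph and $\lambda:A\to 2^{\{1,\dots,t_{\max}\}}$ giving the time-steps at which each arc is active. A temporal oriented tree $\mathcal T=(T,\lambda)$ is one whose underlying digraph $T$ is an orientation of a tree. A temporal path is a sequence $(v_1,v_2,t_1),\dots,(v_{k-1},v_k,t_{k-1})$ with pairwise distinct $v_i$, $\overrightarrow{v_iv_{i+1}}\in A$, $t_i\in\lambda(\overrightarrow{v_iv_{i+1}})$ and $t_1<\dots<t_{k-1}$. Two vertices $u\ne v$ are temporally connected if there is a temporal path from $u$ to $v$ or from $v$ to $u$. The connectivity graph of $\mathcal T$ is the undirected graph $G$ with $V(G)=V(T)$ and $uv\in E(G)$ iff $u\neq v$ and $u,v$ are temporally connected. *)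

(* Defs.v *)
From mathcomp Require Import all_boot.
Set Implicit Arguments. Unset Strict Implicit. Unset Printing Implicit Defensive.

Definition undir (T : finType) (A : rel T) : rel T := fun x y => A x y || A y x.

Definition is_cycle (T : finType) (U : rel T) (x : T) (p : seq T) : bool :=
  [&& uniq (x :: p), 2 <= size p, path U x p & U (last x p) x].

Definition oriented_tree (T : finType) (A : rel T) : Prop :=
  [/\ 0 < #|T|,
      forall x, ~~ A x x,
      forall x y, A x y -> ~~ A y x,
      forall x y, connect (undir A) x y &
      forall x p, ~~ is_cycle (undir A) x p].

(* Temporal labelling: lam u v t means arc uv is active at time t. *)
Definition labelling_ok (T : finType) (tmax : nat) (lam : T -> T -> pred nat) :=
  forall u v t, lam u v t -> 1 <= t <= tmax.

(* A temporal path is encoded as a start vertex x and the list s of pairs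
   (v_{i+1}, t_i); i.e. x = v_1 and the triples are (v_i, v_{i+1}, t_i). *)
Definition tpath (T : finType) (A : rel T) (lam : T -> T -> pred nat)
    (x : T) (s : seq (T * nat)) : bool :=
  [&& 0 < size s,
      uniq (x :: map fst s),
      path (fun a b : T * nat => A a.1 b.1 && lam a.1 b.1 b.2) (x, 0) s &
      sorted ltn (map snd s)].

Definition tpath_from_to (T : finType) (A : rel T) (lam : T -> T -> pred nat)
    (P : T * seq (T * nat)) (u v : T) : bool :=
  [&& tpath A lam P.1 P.2, P.1 == u & last P.1 (map fst P.2) == v].

Definition tverts (T : finType) (P : T * seq (T * nat)) : seq T :=
  P.1 :: map fst P.2.

Definition tconnected (T : finType) (A : rel T) (lam : T -> T -> pred nat)
    (u v : T) : Prop :=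
  u <> v /\
  ((exists s, tpath_from_to A lam (u, s) u v) \/
   (exists s, tpath_from_to A lam (v, s) v u)).

Definition connG (T : finType) (A : rel T) (lam : T -> T -> pred nat) : T -> T -> Prop :=
  fun u v => tconnected A lam u v.

(* u : nat -> T (indices mod k) lists the vertices u_0,...,u_{k-1} of an
   induced cycle of length k in the graph with edge relation G. *)
Definition induced_cycle (T : finType) (G : T -> T -> Prop) (k : nat) (u : nat -> T) : Prop :=
  [/\ forall i, u (i + k) = u i,
      forall i j, i < k -> j < k -> u i = u j -> i = j,
      forall i, G (u i) (u i.+1) &
      forall i j, i < k -> j < k -> G (u i) (u j) ->
        j = i.+1 %% k \/ i = j.+1 %% k].

(* Main.v *)
Require Import Defs.
From mathcomp Require Import all_boot.
Set Implicit Arguments. Unset Strict Implicit. Unset Printing Implicit Defensive.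

Definition tR (T : finType) (A : rel T) (lam : T -> T -> pred nat) : rel (T * nat) :=
  fun a b => A a.1 b.1 && lam a.1 b.1 b.2.

Lemma tR_path (T : finType) (A : rel T) lam z s :
  path (tR A lam) z s -> path A z.1 (map fst s).
Proof.
rewrite path_map; apply: sub_path => a b /andP[]; done.
Qed.

Lemma path_ltn_swap l1 x t1 t2 l3 l2 : path ltn x (l1 ++ t1 :: l3) -> t1 <= t2 ->
  path ltn t2 l2 -> path ltn x (l1 ++ t2 :: l2).
Proof.
elim: l1 x => [|y l1 IH] x /=.
  by move=> /andP[h _] ht ->; rewrite (leq_trans h ht).
by move=> /andP[-> h] ht hl; rewrite (IH y h ht hl).
Qed.

Lemma sorted_swap l1 t1 t2 l3 l2 : sorted ltn (l1 ++ t1 :: l3) -> t1 <= t2 ->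
  path ltn t2 l2 -> sorted ltn (l1 ++ t2 :: l2).
Proof.
case: l1 => [|y l1] /=; first by move=> _ _ ->.
exact: path_ltn_swap.
Qed.

Section Side.
Variables (T : finType) (A : rel T) (lam : T -> T -> pred nat).
Hypothesis hanti : forall x y, A x y -> ~~ A y x.
Hypothesis hacyc : forall x p, ~~ is_cycle (undir A) x p.
Variables p q : T.
Hypothesis hpq : A p q.

Definition A' : rel T := fun x y => A x y && ~~ ((x == p) && (y == q)).
Definition side (v : T) : bool := connect (undir A') q v.

Lemma side_q : side q.
Proof. exact: connect0. Qed.

Lemma pq_neq : p != q.
Proof. apply/eqP => e; move: (hanti hpq) hpq; rewrite e => /negbTE->. done. Qed.

Lemma side_p : ~~ side p.
Proof.
apply/negP => /connectP [l hl hlast].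
move: hlast; case/shortenP: hl => l' hl' huniq _ hlast.
have hsz : 2 <= size l'.
  case: l' hl' huniq hlast => [|y [|z l'']] //=.
  - move=> _ _ e; move: pq_neq; by rewrite e eqxx.
  - rewrite andbT => hqy _ e; rewrite -e in hqy.
    move: hqy; rewrite /undir /A' !eqxx /= andbF orbF => /andP[hqp _].
    by move: (hanti hpq); rewrite hqp.
have : is_cycle (undir A) q l'.
  have hU : undir A p q by rewrite /undir hpq.
  rewrite /is_cycle huniq hsz -hlast hU andbT /=.
  apply: sub_path hl' => a b; rewrite /undir /A' => /orP[/andP[-> _]|/andP[-> _]] //.
  by rewrite orbT.
by rewrite (negbTE (hacyc _ _)).
Qed.

Lemma side_back c e : A' c e -> side e -> side c.
Proof.
move=> h he; apply: connect_trans he (connect1 _); by rewrite /undir h orbT.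
Qed.

Lemma side_fwd c e : A' c e -> side c -> side e.
Proof.
move=> h hc; apply: connect_trans hc (connect1 _); by rewrite /undir h.
Qed.

Lemma side_step c e : A c e -> side c -> side e.
Proof.
move=> hce hc; case: (boolP ((c == p) && (e == q))) => [/andP[_ /eqP->]|hne].
  exact: side_q.
by apply: side_fwd hc; rewrite /A' hce hne.
Qed.

Lemma side_flip c e : A c e -> ~~ side c -> side e -> (c == p) && (e == q).
Proof.
move=> hce hc he; apply/negPn/negP => hne.
by move: hc; rewrite (side_back _ he) // /A' hce hne.
Qed.

Lemma side_mono x l : path A x l -> side x -> all side l.
Proof.
elim: l x => [|y l IH] x //= /andP[hxy hp] hx.
have hy := side_step hxy hx; by rewrite hy (IH y).
Qed.

Lemma side_mono_last x l : path A x l -> side x -> side (last x l).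
Proof.
move=> hp hx; have := mem_last x l; rewrite inE => /orP[/eqP->//|hin].
exact: (allP (side_mono hp hx)).
Qed.

Lemma side_const x l : path A x l -> (p \notin x :: l) || (q \notin l) ->
  forall w, w \in x :: l -> side w = side x.
Proof.
elim: l x => [|y l IH] x /=.
  by move=> _ _ w; rewrite inE => /eqP->.
move=> /andP[hxy hp] hpq'.
have hyx : side y = side x.
  case: (boolP (side x)) => hx; first by rewrite (side_step hxy hx).
  apply/negP => hy; move: (side_flip hxy hx hy) => /andP[/eqP ex /eqP ey].
  by move: hpq'; rewrite ex ey !inE !eqxx /=.
have hIH : (p \notin y :: l) || (q \notin l).
  move: hpq'; rewrite !inE !negb_or => /orP[/andP[_ ->]//|/andP[_ ->]]; by rewrite orbT.
move=> w; rewrite inE => /orP[/eqP->//|hw].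
by rewrite (IH y hp hIH w hw) hyx.
Qed.

Lemma tsplit s z : path (tR A lam) z s -> ~~ side z.1 -> side (last z.1 (map fst s)) ->
  exists s1 t s2, [/\ s = s1 ++ (q, t) :: s2, last z.1 (map fst s1) = p,
     all (fun w => ~~ side w) (map fst s1) & all side (map fst s2)].
Proof.
elim: s z => [|y s IH] z /=; first by move=> _ /negbTE->.
move=> /andP[hzy hp] hz hl.
case: (boolP (side y.1)) => hy.
  move: (hzy) => /andP[hA _]; move: (side_flip hA hz hy) => /andP[/eqP ez /eqP ey].
  exists [::], y.2, s; split => //=.
  - by case: y ey {hzy hA hy hp hl} => a b /= ->.
  - exact: side_mono (tR_path hp) hy.
have [s1 [t [s2 [e1 e2 e3 e4]]]] := IH y hp hy hl.
exists (y :: s1), t, s2; split => //=; by rewrite ?e1 ?hy.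
Qed.


Lemma orient x y : tconnected A lam x y -> ~~ side x -> side y ->
  exists s, tpath_from_to A lam (x, s) x y.
Proof.
move=> [_ [[s hs]|[s hs]]] hx hy; first by exists s.
exfalso; move: hs; rewrite /tpath_from_to /tpath /= => /and3P[/and4P[_ _ hp _] _ /eqP hl].
have := side_mono_last (tR_path hp) hy; by rewrite /= hl (negbTE hx).
Qed.

Lemma comb a1 s1a t1 s1b a2 s2a t2 s2b :
  tpath A lam a1 (s1a ++ (q, t1) :: s1b) -> last a1 (map fst s1a) = p ->
  all (fun w => ~~ side w) (map fst s1a) -> ~~ side a1 ->
  tpath A lam a2 (s2a ++ (q, t2) :: s2b) -> last a2 (map fst s2a) = p ->
  all side (map fst s2b) -> t1 <= t2 ->
  tpath A lam a1 (s1a ++ (q, t2) :: s2b).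
Proof.
move=> /and4P[_ hu1 hp1 hs1] hl1 hall1 ha1 /and4P[_ hu2 hp2 hs2] hl2 hall2 ht.
apply/and4P; split.
- by rewrite size_cat /= addnS.
  move: hu1 hu2; rewrite !map_cat -!cat_cons !cat_uniq => /and3P[u1 _ _] /and3P[_ _ u2].
  rewrite u1 u2 andbT; apply/hasPn => w /= hw; apply/negP => hw1.
  have sw : side w.
    move: hw; rewrite inE => /orP[/eqP->|hw]; [exact: side_q| exact: (allP hall2)].
  move: hw1; rewrite inE => /orP[/eqP ew|hw1]; first by move: ha1; rewrite -ew sw.
  by move: (allP hall1 _ hw1); rewrite sw.
- move: hp1 hp2; rewrite !cat_path => /andP[-> _] /andP[_ /= /andP[/andP[hA hlam] ->]].
  rewrite andbT /tR /=.
  have e1 : (last (a1, 0) s1a).1 = p by rewrite -hl1 -(last_map fst).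
  have e2 : (last (a2, 0) s2a).1 = p by rewrite -hl2 -(last_map fst).
  by rewrite e1; rewrite e2 in hA hlam; rewrite hA hlam.
- move: hs1 hs2; rewrite !map_cat /= => hs1 hs2.
  apply: sorted_swap hs1 ht _.
  by move: hs2; rewrite sorted_cat_cons => /andP[].
Qed.

Lemma tsplit_ft a s b : tpath_from_to A lam (a, s) a b -> ~~ side a -> side b ->
  exists s1 t s2, [/\ s = s1 ++ (q, t) :: s2, last a (map fst s1) = p,
     all (fun w => ~~ side w) (map fst s1), all side (map fst s2)
     & last q (map fst s2) = b].
Proof.
rewrite /tpath_from_to /= => /and3P[ht _ /eqP hl] ha hb.
move: (ht) => /and4P[_ _ hp _].
have h3 : side (last (a, 0).1 (map fst s)) by rewrite /= hl.
have [s1 [t [s2 [e1 e2 e3 e4]]]] := tsplit hp ha h3.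
exists s1, t, s2; split => //.
by rewrite -hl e1 map_cat last_cat /=.
Qed.

Lemma cross x1 y1 x2 y2 :
  tconnected A lam x1 y1 -> ~~ side x1 -> side y1 ->
  tconnected A lam x2 y2 -> ~~ side x2 -> side y2 ->
  tconnected A lam x1 y2 \/ tconnected A lam x2 y1.
Proof.
move=> c1 hx1 hy1 c2 hx2 hy2.
have [r1 h1] := orient c1 hx1 hy1; have [r2 h2] := orient c2 hx2 hy2.
have [s1a [t1 [s1b [e1 l1 al1 bl1 f1]]]] := tsplit_ft h1 hx1 hy1.
have [s2a [t2 [s2b [e2 l2 al2 bl2 f2]]]] := tsplit_ft h2 hx2 hy2.
move: h1 h2; rewrite /tpath_from_to /= e1 e2 => /andP[tp1 _] /andP[tp2 _].
case: (leqP t1 t2) => ht; [left|right].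
- split; first by move=> e; move: hx1; rewrite e hy2.
  left; exists (s1a ++ (q, t2) :: s2b).
  rewrite /tpath_from_to /= eqxx (comb tp1 l1 al1 hx1 tp2 l2 bl2 ht) /=.
  by rewrite map_cat last_cat l1 /= f2.
- split; first by move=> e; move: hx2; rewrite e hy1.
  left; exists (s2a ++ (q, t1) :: s1b).
  rewrite /tpath_from_to /= eqxx (comb tp2 l2 al2 hx2 tp1 l1 bl1 (ltnW ht)) /=.
  by rewrite map_cat last_cat l2 /= f1.
Qed.

End Side.

From mathcomp Require Import zify.

Lemma tconn_sym (T : finType) (A : rel T) lam x y :
  tconnected A lam x y -> tconnected A lam y x.
Proof. move=> [ne [h|h]]; split; [by move=> e; apply: ne| by right| by move=> e; apply: ne| by left]. Qed.

Lemma first_exit (T : finType) (A : rel T) (V : seq T) zs z :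
  path A z zs -> z \in V -> last z zs \notin V ->
  exists a b post, [/\ A a b, a \in V, b \notin V, path A b post & last b post = last z zs].
Proof.
elim: zs z => [|y zs IH] z /=; first by move=> _ ->.
move=> /andP[hzy hp] hz hl.
case: (boolP (y \in V)) => hy; first exact: IH.
by exists z, y, zs.
Qed.

Lemma separate (T : finType) (A : rel T)
  (hanti : forall x y, A x y -> ~~ A y x)
  (hacyc : forall x p, ~~ is_cycle (undir A) x p)
  x1 l1 x2 l2 z zs :
  path A x1 l1 -> path A x2 l2 ->
  (forall w, w \in x1 :: l1 -> w \notin x2 :: l2) ->
  path A z zs -> z \in x1 :: l1 -> last z zs \in x2 :: l2 ->
  exists p q, [/\ A p q, forall w, w \in x1 :: l1 -> ~~ side A p q w
                 & forall w, w \in x2 :: l2 -> side A p q w].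
Proof.
move=> hp1 hp2 hdis hz hzV hlW.
have hlV : last z zs \notin x1 :: l1.
  by apply/negP => h; move: (hdis _ h); rewrite hlW.
have [a [b [post [hab haV hbV hpost hlast]]]] := first_exit hz hzV hlV.
exists a, b; split => //.
- have hc : (a \notin x1 :: l1) || (b \notin l1).
    by apply/orP; right; move: hbV; rewrite inE negb_or => /andP[].
  have e1 := side_const hp1 hc.
  move=> w hw; rewrite (e1 w hw) -(e1 a haV); exact: side_p.
- have hc : (a \notin x2 :: l2) || (b \notin l2) by rewrite (hdis _ haV).
  have e2 := side_const hp2 hc.
  have hs : side A a b (last z zs) by rewrite -hlast; apply: side_mono_last hpost (side_q _ _ _).
  move=> w hw; rewrite (e2 w hw) -(e2 _ hlW); exact: hs.
Qed.

Lemma flip_exists (f : nat -> bool) a n : f a != f (a + n) ->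
  exists l, [/\ a <= l, l < a + n & f l != f l.+1].
Proof.
elim: n => [|n IH]; first by rewrite addn0 eqxx.
case: (boolP (f a == f (a + n))) => [/eqP e|hne] hn.
  by exists (a + n); split => //; [lia | lia | rewrite -e -addnS].
have [l [h1 h2 h3]] := IH hne; exists l; split => //; lia.
Qed.

Lemma arith k i a b : 6 <= k -> (a = i.+1 \/ a = i.+2) -> i.+3 <= b <= i + k ->
  (a.+1 == b %[mod k]) || (b.+1 == a %[mod k]) ->
  (b = i.+3 /\ a = i.+2) \/ (b = i + k /\ a = i.+1).
Proof.
move=> hk ha /andP[hb1 hb2].
have [j [ej hj1 hj2]] : exists j, [/\ b = i + j, 3 <= j & j <= k] by exists (b - i); split; lia.
have [r [er hr]] : exists r, a = i + r /\ (r = 1 \/ r = 2) by case: ha => ->; [exists 1|exists 2]; split; lia.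
subst a b.
rewrite -addnS -[(i + j).+1]addnS !eqn_modDl => /orP[/eqP h|/eqP h].
- have hr1 : r.+1 %% k = r.+1 by apply: modn_small; lia.
  rewrite hr1 in h.
  case: (ltnP j k) => hjk.
    rewrite modn_small // in h; left; split; lia.
  have ejk : j = k by lia.
  move: h; rewrite ejk modnn; lia.
- have hr1 : r %% k = r by apply: modn_small; lia.
  rewrite hr1 in h.
  case: (ltnP j.+1 k) => hjk.
    rewrite modn_small // in h; lia.
  case: (ltnP j k) => hjk2.
    have ejk : j.+1 = k by lia.
    move: h; rewrite ejk modnn; lia.
  have ejk : j = k by lia.
  move: h; rewrite ejk -addn1 modnDl modn_small; [lia|lia].
Qed.

Section Cyc.
Variables (T : finType) (A : rel T) (lam : T -> T -> pred nat) (k : nat) (u : nat -> T).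
Hypothesis hH : induced_cycle (connG A lam) k u.
Hypothesis hk : 6 <= k.

Lemma u_period j n : u (j + n * k) = u j.
Proof.
case: hH => hper _ _ _.
elim: n => [|n IH]; first by rewrite mul0n addn0.
have -> : j + n.+1 * k = (j + n * k) + k by rewrite mulSn; lia.
by rewrite hper.
Qed.

Lemma u_mod x : u x = u (x %% k).
Proof. by rewrite {1}(divn_eq x k) addnC u_period. Qed.

Lemma adj x y : connG A lam (u x) (u y) -> (x.+1 == y %[mod k]) || (y.+1 == x %[mod k]).
Proof.
case: hH => _ _ _ hind.
have hk0 : 0 < k by lia.
rewrite (u_mod x) (u_mod y) => h.
have := hind _ _ (ltn_pmod x hk0) (ltn_pmod y hk0) h.
move=> [->|->]; apply/orP; [left|right];
  by rewrite -addn1 -modnDml addn1.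
Qed.

Lemma orient_idx p q j : connG A lam (u j) (u j.+1) ->
  side A p q (u j) != side A p q (u j.+1) ->
  exists xa ya, [/\ (xa = j /\ ya = j.+1) \/ (xa = j.+1 /\ ya = j),
    ~~ side A p q (u xa), side A p q (u ya) & tconnected A lam (u xa) (u ya)].
Proof.
move=> hc; case: (boolP (side A p q (u j))) => hs hne.
- exists j.+1, j; split.
  + by right.
  + by move: hne; case: (side A p q (u j.+1)).
  + exact: hs.
  + exact: tconn_sym.
- exists j, j.+1; split.
  + by left.
  + exact: hs.
  + by move: hne; case: (side A p q (u j.+1)).
  + exact: hc.
Qed.

Lemma final p q i :
  side A p q (u i) = side A p q (u i.+1) ->
  side A p q (u i.+1) != side A p q (u i.+2) ->
  side A p q (u i.+2) = side A p q (u i.+3) -> False.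
Proof.
move=> e1 ne e2.
case: hH => hper _ hedge _.
have eik : side A p q (u (i + k)) = side A p q (u i) by rewrite hper.
have hne3 : side A p q (u i.+3) != side A p q (u (i.+3 + (k - 3))).
  have -> : i.+3 + (k - 3) = i + k by lia.
  by rewrite eik e1 -e2 eq_sym.
have [l [hl1 hl2 hl3]] := @flip_exists (fun j => side A p q (u j)) _ _ hne3.
have [xa [ya [hxy ha hb hc]]] := orient_idx (hedge i.+1) ne.
have [xb [yb [hxy' ha' hb' hc']]] := orient_idx (hedge l) hl3.
have key : forall a b, (a = i.+1 \/ a = i.+2) -> i.+3 <= b <= i + k ->
    (connG A lam (u a) (u b) \/ connG A lam (u b) (u a)) ->
    side A p q (u a) != side A p q (u b) -> False.
  move=> a b ha0 hb0 hcon hs.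
  have hadj : (a.+1 == b %[mod k]) || (b.+1 == a %[mod k]).
    case: hcon => h; first exact: adj.
    by rewrite orbC; apply: adj.
  case: (arith hk ha0 hb0 hadj) => [[eb ea]|[eb ea]]; move: hs; rewrite eb ea.
  - by rewrite e2 eqxx.
  - by rewrite eik e1 eqxx.
have hxa : xa = i.+1 \/ xa = i.+2 by case: hxy => [[-> _]|[-> _]]; [left|right].
have hya : ya = i.+1 \/ ya = i.+2 by case: hxy => [[_ ->]|[_ ->]]; [right|left].
have hlk : l.+1 <= i + k by clear -hl2 hk; lia.
have hxb : i.+3 <= xb <= i + k by case: hxy' => [[-> _]|[-> _]]; apply/andP; split; solve [exact: hl1 | exact: (leq_trans hl1 (leqnSn _)) | exact: hlk | exact: ltnW hlk].
have hyb : i.+3 <= yb <= i + k by case: hxy' => [[_ ->]|[_ ->]]; apply/andP; split; solve [exact: hl1 | exact: (leq_trans hl1 (leqnSn _)) | exact: hlk | exact: ltnW hlk].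
case: (cross hc ha hb hc' ha' hb') => h.
- apply: (key xa yb hxa hyb (or_introl h)).
  by move: ha hb'; case: (side A p q (u xa)); case: (side A p q (u yb)).
- apply: (key ya xb hya hxb (or_intror h)).
  by move: hb ha'; case: (side A p q (u ya)); case: (side A p q (u xb)).
Qed.

End Cyc.

Lemma tverts_info (T : finType) (A : rel T) lam (P : T * seq (T * nat)) a b :
  tpath_from_to A lam P a b || tpath_from_to A lam P b a ->
  [/\ path A P.1 (map fst P.2), a \in tverts P & b \in tverts P].
Proof.
case: P => x s; rewrite /tpath_from_to /tverts /=.
move=> /orP[|] /and3P[/and4P[_ _ hp _] /eqP ex /eqP el]; split.
- exact: (tR_path hp).
- by rewrite -ex inE eqxx.
- by rewrite -el mem_last.
- exact: (tR_path hp).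
- by rewrite -el mem_last.
- by rewrite -ex inE eqxx.
Qed.

Theorem mainTheorem9 (T : finType) (A : rel T) (tmax : nat)
    (lam : T -> T -> pred nat)
    (hT : oriented_tree A) (hlam : labelling_ok tmax lam)
    (k : nat) (u : nat -> T)
    (hk6 : 6 <= k) (hkeven : ~~ odd k)
    (hH : induced_cycle (connG A lam) k u)
    (Q : T -> T -> T * seq (T * nat))
    (hQsym : forall x y, connG A lam x y -> Q x y = Q y x)
    (hQ : forall x y, connG A lam x y ->
            tpath_from_to A lam (Q x y) x y || tpath_from_to A lam (Q x y) y x) :
  forall i, exists w,
    w \in tverts (Q (u i) (u i.+1)) /\ w \in tverts (Q (u i.+2) (u i.+3)).
Proof.
case: hT => _ _ hanti _ hacyc i.
case: (hH) => _ _ hedge _.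
case: (boolP (has (fun w => w \in tverts (Q (u i.+2) (u i.+3))) (tverts (Q (u i) (u i.+1))))).
  by move=> /hasP[w h1 h2]; exists w.
move=> /hasPn hdis; exfalso.
have [hp1 h01 h11] := tverts_info (hQ _ _ (hedge i)).
have [hp2 h22 h32] := tverts_info (hQ _ _ (hedge i.+2)).
move: hdis h01 h11 h22 h32 hp1 hp2.
rewrite /tverts.
case: (Q (u i) (u i.+1)) => x1 l1; case: (Q (u i.+2) (u i.+3)) => x2 l2 /=.
move=> hdis h0 h1 h2 h3 hp1 hp2.
have hdis' : forall w, w \in x2 :: map fst l2 -> w \notin x1 :: map fst l1.
  by move=> w hw; apply/negP => hw'; move: (hdis w hw'); rewrite hw.
have [_ [[s hs]|[s hs]]] := hedge i.+1.
- move: hs; rewrite /tpath_from_to /= => /and3P[/and4P[_ _ hp _] _ /eqP hl].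
  have hlW : last (u i.+1) (map fst s) \in x2 :: map fst l2 by rewrite /= hl.
  have [p [q [hpq hV hW]]] := separate hanti hacyc hp1 hp2 hdis (tR_path hp) h1 hlW.
  apply: (final hH hk6 (p := p) (q := q) (i := i)).
  + by rewrite (negbTE (hV _ h0)) (negbTE (hV _ h1)).
  + by rewrite (negbTE (hV _ h1)) (hW _ h2).
  + by rewrite (hW _ h2) (hW _ h3).
- move: hs; rewrite /tpath_from_to /= => /and3P[/and4P[_ _ hp _] _ /eqP hl].
  have hlW : last (u i.+2) (map fst s) \in x1 :: map fst l1 by rewrite /= hl.
  have [p [q [hpq hV hW]]] := separate hanti hacyc hp2 hp1 hdis' (tR_path hp) h2 hlW.
  apply: (final hH hk6 (p := p) (q := q) (i := i)).
  + by rewrite (hW _ h0) (hW _ h1).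
  + by rewrite (negbTE (hV _ h2)) (hW _ h1).
  + by rewrite (negbTE (hV _ h2)) (negbTE (hV _ h3)).
Qed.
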